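(* Let $s$ be a positive integer. Put $d_s(0)=1$ and $d_s(k)=0$ for all integers $k<0$, and for $k\geq 1$ define $d_s(k)=\sum_{j=1}^sd_s(j-1)\,d_s(k-j)$. Then for every $n\geq s$, \[A_{312}(U_{\mathrm{spine}=s,n}^\alpha)=d_s(n-s+1).\]
   Context: For integers $s\ge1$ and $n\ge 0$, the labeled uneven comb $U^\alpha_{\mathrm{spine}=s,n}$ is the poset on $\{1,\dots,n\}$ whose order is generated by the covering relations $i\lessdot i+1$ for $1\le i\le s-1$ with $i+1\le n$, and $i\lessdot i+s$ whenever $i+s\le n$. A linear extension is viewed as a permutation of $[n]$ in which $x$ precedes $y$ whenever $x<y$ in the poset. $A_\tau(P)$ denotes the number of linear extensions of $P$ that avoid the permutation pattern $\tau$. *)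

(* Defs.v *)
From mathcomp Require Import all_boot.
Set Implicit Arguments. Unset Strict Implicit. Unset Printing Implicit Defensive.

(* Covering relations of the labeled uneven comb U^alpha_{spine=s,n} on {1..n}:
   i <. i+1 for 1 <= i <= s-1 with i+1 <= n, and i <. i+s whenever i+s <= n. *)
Definition comb_cover (s n i j : nat) : Prop :=
  1 <= i /\
  ((i <= s - 1 /\ j = i + 1 /\ j <= n) \/ (j = i + s /\ j <= n)).

Inductive comb_le (s n : nat) : nat -> nat -> Prop :=
| comb_le_refl x : 1 <= x <= n -> comb_le s n x x
| comb_le_step x y z : comb_cover s n x y -> comb_le s n y z -> comb_le s n x z.

Definition comb_linext (s n : nat) (p : seq nat) : Prop :=
  perm_eq p (iota 1 n) /\
  forall x y, comb_le s n x y -> index x p <= index y p.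

Definition avoids312 (p : seq nat) : Prop :=
  ~ exists i j k, [/\ i < j, j < k, k < size p &
                     nth 0 p j < nth 0 p k < nth 0 p i].

Definition count_is {T : eqType} (P : T -> Prop) (N : nat) : Prop :=
  exists L : seq T, [/\ uniq L, forall x, x \in L <-> P x & size L = N].

(* dlist s k = [:: d_s(0); ...; d_s(k)], with d_s(0)=1,
   d_s(k) = sum_{j=1}^s d_s(j-1) d_s(k-j) (terms with k-j<0 vanish). *)
Fixpoint dlist (s k : nat) : seq nat :=
  match k with
  | 0 => [:: 1]
  | k'.+1 =>
      let L := dlist s k' in
      rcons L (\sum_(1 <= j < s.+1 | j <= k) nth 0 L (j - 1) * nth 0 L (k - j))
  end.

Definition d (s k : nat) : nat := nth 0 (dlist s k) k.

(* Main.v *)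
Require Import Defs.
From mathcomp Require Import all_boot zify.
Set Implicit Arguments. Unset Strict Implicit.

Ltac slia := repeat (match goal with
 | H : is_true (leq _ _) |- _ => revert H
 | H : is_true (andb (leq _ _) (leq _ _)) |- _ => revert H
 | H : (leq _ _) = _ |- _ => revert H
 | H : is_true (~~ (leq _ _)) |- _ => revert H
 | H : is_true (~~ (?x == _)) |- _ => let T := type of x in unify T nat; revert H
 | H : ?x = _ |- _ => let T := type of x in unify T nat; revert H
 | H : ~ (?x = _) |- _ => let T := type of x in unify T nat; revert H
 end); repeat (match goal with H : _ |- _ => clear H end); intros; lia.

Lemma avoid_split (u v : seq nat) :
  avoids312 (u ++ v) -> avoids312 u /\ avoids312 v.
Proof.
move=> H; split.
- move=> [i [j [k [Hij Hjk Hk Hv]]]]; apply: H; exists i, j, k.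
  rewrite size_cat !nth_cat.
  have Hj : j < size u by slia.
  have Hi : i < size u by slia.
  by rewrite Hi Hj Hk; split => //; slia.
- move=> [i [j [k [Hij Hjk Hk Hv]]]]; apply: H.
  exists (size u + i), (size u + j), (size u + k).
  rewrite size_cat !nth_cat.
  have E : forall t, (size u + t < size u) = false by move=> t; slia.
  rewrite !E !addKn; split => //; slia.
Qed.

Lemma nth_cat_mem (u w : seq nat) t : t < size (u ++ w) ->
  if t < size u then nth 0 (u ++ w) t \in u
  else (nth 0 (u ++ w) t \in w) && (nth 0 (u ++ w) t == nth 0 w (t - size u)).
Proof.
rewrite size_cat => H; case: ifP => h; rewrite nth_cat h; first by rewrite mem_nth.
by rewrite mem_nth ?eqxx // ltn_subLR //; slia.
Qed.

Lemma avoid_join (u v : seq nat) :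
  (forall x y, x \in u -> y \in v -> x < y) ->
  avoids312 u -> avoids312 v -> avoids312 (u ++ v).
Proof.
move=> Huv Hu Hv [i [j [k [Hij Hjk Hk Hn]]]].
have Mk := nth_cat_mem Hk.
have Mi := nth_cat_mem (ltn_trans Hij (ltn_trans Hjk Hk)).
have Mj := nth_cat_mem (ltn_trans Hjk Hk).
case: (ltnP k (size u)) => hk.
  apply: Hu; exists i, j, k.
  have Hj : j < size u by slia.
  have Hi : i < size u by slia.
  by move: Hn; rewrite !nth_cat Hi Hj hk.
case: (ltnP i (size u)) => hi.
  rewrite hi in Mi; rewrite ltnNge hk /= in Mk; case/andP: Mk => Mk _.
  have := Huv _ _ Mi Mk; move: Hn => /andP [_ h1]; slia.
apply: Hv; exists (i - size u), (j - size u), (k - size u).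
rewrite size_cat in Hk; move: Hn; rewrite !nth_cat.
have E1 : (i < size u) = false by slia.
have E2 : (j < size u) = false by slia.
have E3 : (k < size u) = false by slia.
rewrite E1 E2 E3 => Hn; split => //; slia.
Qed.

Lemma avoid_small (u : seq nat) : size u < 3 -> avoids312 u.
Proof. move=> H [i [j [k [? ? ? _]]]]; slia. Qed.

Lemma avoid_cons a (v : seq nat) : (forall y, y \in v -> a < y) ->
  avoids312 v -> avoids312 (a :: v).
Proof.
move=> H Hv; rewrite -cat1s; apply: avoid_join => //; last exact: avoid_small.
by move=> x y; rewrite inE => /eqP ->; apply: H.
Qed.

Lemma avoid_iota a k : avoids312 (iota a k).
Proof.
elim: k a => [|k IH] a; first exact: avoid_small.
by apply: avoid_cons => // y; rewrite mem_iota => /andP[]; slia.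
Qed.

Lemma avoid_mid (u v : seq nat) a :
  (forall x, x \in u -> a < x) -> (forall y, y \in v -> a < y) ->
  (forall x y, x \in u -> y \in v -> x < y) ->
  avoids312 u -> avoids312 v -> avoids312 (u ++ a :: v).
Proof.
move=> Hua Hva Huv Hu Hv.
have Hw : avoids312 (a :: v) by apply: avoid_cons.
have Hge : forall t, t < size (u ++ a :: v) -> a <= nth 0 (u ++ a :: v) t.
  move=> t /nth_cat_mem; case: ifP => _; first by move/Hua/ltnW.
  case/andP; rewrite inE => /orP[/eqP ->//|/Hva/ltnW //].
move=> [i [j [k [Hij Hjk Hk Hn]]]].
have Mi := nth_cat_mem (ltn_trans Hij (ltn_trans Hjk Hk)).
have Mk := nth_cat_mem Hk.
have Gj := Hge _ (ltn_trans Hjk Hk).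
case: (ltnP k (size u)) => hk.
  apply: Hu; exists i, j, k.
  have Hj : j < size u by slia.
  have Hi : i < size u by slia.
  by move: Hn; rewrite !nth_cat Hi Hj hk.
case: (ltnP i (size u)) => hi.
  rewrite hi in Mi; rewrite ltnNge hk /= in Mk; case/andP: Mk; rewrite inE.
  case/orP => [/eqP E _|Mk _]; first by move: Hn; rewrite E; slia.
  have := Huv _ _ Mi Mk; move: Hn => /andP [_ h1]; slia.
apply: Hw; exists (i - size u), (j - size u), (k - size u).
rewrite size_cat in Hk; move: Hn; rewrite !nth_cat.
have E1 : (i < size u) = false by slia.
have E2 : (j < size u) = false by slia.
have E3 : (k < size u) = false by slia.
rewrite E1 E2 E3 => Hn; split => //; slia.
Qed.

Lemma size_dlist s k : size (dlist s k) = k.+1.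
Proof. by elim: k => //= k IH; rewrite size_rcons IH. Qed.

Lemma nth_dlist s k i : i <= k -> nth 0 (dlist s k) i = d s i.
Proof.
move=> H; rewrite /d; elim: k H => [|k IH] H; first by have -> : i = 0 by slia.
case: (ltnP i k.+1) => hi.
- by rewrite /= nth_rcons size_dlist hi IH.
- by have -> : i = k.+1 by slia.
Qed.

Lemma d_rec s k : d s k.+1 =
  \sum_(1 <= j < (minn s k.+1).+1) d s (j - 1) * d s (k.+1 - j).
Proof.
rewrite {1}/d /= nth_rcons size_dlist ltnn eqxx.
have E : \sum_(1 <= j < s.+1 | j <= k.+1) nth 0 (dlist s k) (j - 1) * nth 0 (dlist s k) (k.+1 - j)
  = \sum_(1 <= j < s.+1 | j <= k.+1) d s (j - 1) * d s (k.+1 - j).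
  rewrite big_nat_cond [RHS]big_nat_cond; apply: eq_bigr => j /andP[/andP[h1 h2] h3].
  rewrite !nth_dlist //; slia.
rewrite E; case: (leqP s k.+1) => hs.
- rewrite big_nat_cond [RHS]big_nat_cond; apply: eq_bigl => j.
  apply/idP/idP; [move=> /andP[/andP[->->] _]//|move=> /andP[/andP[h1 h2] _]].
  rewrite h1 h2 /=; slia.
- rewrite [RHS](big_nat_widen _ _ _ _ _ (leqW hs)).
  by apply: eq_bigl => j.
Qed.

Fixpoint gen (s f a m : nat) : seq (seq nat) :=
  if f is f'.+1 then
    if m is 0 then [:: [::]] else
    [seq x.1 ++ a :: x.2 | j <- iota 1 (minn s m),
       x <- [seq (u, v) | u <- gen s f' a.+1 j.-1, v <- gen s f' (a + j) (m - j)]]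
  else [:: [::]].

Lemma size_gen s f a m : m <= f -> size (gen s f a m) = d s m.
Proof.
elim: f a m => [|f IH] a m Hm; first by have -> : m = 0 by slia.
case: m Hm => [|k] Hk //=.
rewrite size_allpairs_dep d_rec sumnE big_map /index_iota subn1 /=.
apply: eq_big_seq => j; rewrite mem_iota => /andP[h1 h2].
rewrite size_allpairs !IH; try slia.
by have -> : j.-1 = j - 1 by slia.
Qed.

Definition Q s a m (x : seq nat) :=
  [/\ perm_eq x (iota a m), avoids312 x &
      forall y, a <= y -> y + s < a + m -> index y x <= index (y + s) x].

Lemma gen_sound s f a m x : m <= f -> x \in gen s f a m -> Q s a m x.
Proof.
elim: f a m x => [|f IH] a m x Hm.
  have -> : m = 0 by slia.
  by rewrite inE => /eqP ->; split => //; apply: avoid_small.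
case: m Hm => [|k] Hk /=.
  by rewrite inE => /eqP ->; split => //; apply: avoid_small.
case/allpairsPdep => j [[u v]] /= [Hj /allpairsP [[u' v'] /= [Hu Hv [-> ->]]] ->].
rewrite mem_iota in Hj.
have [Pu Au Iu] := IH a.+1 j.-1 u' (ltac:(slia)) Hu.
have [Pv Av Iv] := IH (a + j) (k.+1 - j) v' (ltac:(slia)) Hv.
have Mu : forall y, (y \in u') = (a.+1 <= y < a.+1 + j.-1) by move=> y; rewrite (perm_mem Pu) mem_iota.
have Mv : forall y, (y \in v') = (a + j <= y < a + j + (k.+1 - j)) by move=> y; rewrite (perm_mem Pv) mem_iota.
have Su : size u' = j.-1 by rewrite (perm_size Pu) size_iota.
split.
- have -> : iota a k.+1 = a :: (iota a.+1 j.-1 ++ iota (a + j) (k.+1 - j)).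
    rewrite /= -[a + j](_ : a.+1 + j.-1 = _); last by slia.
    by rewrite -iotaD; congr (_ :: iota _ _); slia.
  by rewrite -(cat1s a (iota _ _ ++ _)) -(cat1s a v') perm_catCA perm_cat2l perm_cat.
- apply: avoid_mid => //.
  + by move=> y; rewrite Mu; slia.
  + by move=> y; rewrite Mv; slia.
  + by move=> y z; rewrite Mu Mv; slia.
- move=> y h1 h2; rewrite !index_cat /= !Mu.
  case: (ltnP y a.+1) => hy.
    have -> : y = a by slia.
    have E1 : (a.+1 <= a + s < a.+1 + j.-1) = false by slia.
    by rewrite E1 eqxx /= addn0 leq_addr.
  case: (ltnP y (a.+1 + j.-1)) => hy2 /=.
    case: (ltnP (y + s) (a.+1 + j.-1)) => hs /=.
      have -> : (a < y + s) = true by slia.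
      by apply: Iu; slia.
    have -> : (a == y + s) = false by slia.
    have : index y u' < size u' by rewrite index_mem Mu; slia.
    by rewrite andbF /=; slia.
  have E3 : (y + s < a.+1 + j.-1) = false by slia.
  rewrite E3 andbF /=.
  case: (a =P y) => [?|_]; first slia.
  case: (a =P y + s) => [?|_]; first slia.
  rewrite leq_add2l ltnS; apply: Iv; slia.
Qed.

Lemma cat_mid_inj (u1 u2 v1 v2 : seq nat) a :
  a \notin u1 -> a \notin u2 -> u1 ++ a :: v1 = u2 ++ a :: v2 ->
  u1 = u2 /\ v1 = v2.
Proof.
move=> h1 h2 E.
have S : size u1 = size u2.
  have := congr1 (index a) E; rewrite !index_cat (negbTE h1) (negbTE h2) /= eqxx.
  by rewrite !addn0.
move/eqP: E; rewrite eqseq_cat // => /andP[/eqP -> /eqP[->]]; by [].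
Qed.

Lemma gen_uniq s f a m : m <= f -> uniq (gen s f a m).
Proof.
elim: f a m => [|f IH] a m Hm; first by have -> : m = 0 by slia.
case: m Hm => [|k] Hk //=.
apply: allpairs_uniq_dep; first exact: iota_uniq.
  move=> j; rewrite mem_iota => Hj; apply: allpairs_uniq.
  - by apply: IH; slia.
  - by apply: IH; slia.
  - by move=> [? ?] [? ?] _ _ [-> ->].
move=> [j1 [u1 v1]] [j2 [u2 v2]].
move=> /allpairsPdep [x1 [y1 [Hx1 /allpairsP [[u1' v1'] /= [Hu1 Hv1 Ey1]] E1]]].
move=> /allpairsPdep [x2 [y2 [Hx2 /allpairsP [[u2' v2'] /= [Hu2 Hv2 Ey2]] E2]]].
have T1 := congr1 tag E1; have P1 := congr1 (fun p : {i : nat & (seq nat * seq nat)%type} => (tagged p : (seq nat * seq nat)%type)) E1.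
have T2 := congr1 tag E2; have P2 := congr1 (fun p : {i : nat & (seq nat * seq nat)%type} => (tagged p : (seq nat * seq nat)%type)) E2.
simpl in T1, T2, P1, P2; subst; case: P1 => ? ?; case: P2 => ? ?; subst.
move=> E.
rewrite !mem_iota in Hx1 Hx2.
have [Pu1 _ _] := gen_sound (ltac:(slia) : x1.-1 <= f) Hu1.
have [Pu2 _ _] := gen_sound (ltac:(slia) : x2.-1 <= f) Hu2.
have N1 : a \notin u1' by rewrite (perm_mem Pu1) mem_iota; slia.
have N2 : a \notin u2' by rewrite (perm_mem Pu2) mem_iota; slia.
have [Eu Ev] := cat_mid_inj N1 N2 E.
have S1 := perm_size Pu1; have S2 := perm_size Pu2.
rewrite !size_iota Eu in S1 S2.
have Ex : x1 = x2 by slia.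
by subst.
Qed.

Lemma gen_complete s f a m x : 0 < s -> m <= f -> Q s a m x -> x \in gen s f a m.
Proof.
move=> s0; elim: f a m x => [|f IH] a m x Hm [Px Ax Ix].
  have m0 : m = 0 by slia.
  subst m; have := perm_size Px; rewrite size_iota => /size0nil ->.
  by rewrite inE.
case: m Hm Px Ix => [|k] Hk Px Ix.
  by have := perm_size Px; rewrite size_iota => /size0nil ->; rewrite inE.
have Mx : forall z, (z \in x) = (a <= z < a + k.+1) by move=> z; rewrite (perm_mem Px) mem_iota.
have Ux : uniq x by rewrite (perm_uniq Px) iota_uniq.
have ax : a \in x by rewrite Mx; slia.
have Ex : x = take (index a x) x ++ a :: drop (index a x).+1 x.
  by rewrite -{2}(nth_index 0 ax) -drop_nth ?index_mem // cat_take_drop.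
move: (take _ x) (drop _ x) Ex => u v Ex.
subst x.
have Un := Ux; rewrite cat_uniq /= negb_or in Un.
case/and4P: Un => Uu /andP[au hasuv] av Uv.
have Dv : forall z, z \in u -> z \in v -> False.
  by move=> z zu zv; move/hasP: hasuv; apply; exists z.
have Mu : forall z, z \in u -> a < z < a + k.+1.
  move=> z zu; have := Mx z; rewrite mem_cat zu /= => /esym.
  by case: (a =P z) zu au => [<- -> //|]; slia.
have Mv : forall z, z \in v -> a < z < a + k.+1.
  move=> z zv; have := Mx z; rewrite mem_cat inE zv !orbT => /esym.
  by case: (a =P z) zv av => [<- -> //|]; slia.
have Luv : forall y z, y \in u -> z \in v -> y < z.
  move=> y z yu zv; rewrite ltnNge; apply/negP => zy.
  have yz : z < y.
    by rewrite ltn_neqAle zy andbT; apply/eqP => E; subst; apply: (Dv _ yu zv).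
  apply: Ax; exists (index y u), (size u), (size u + (index z v).+1).
  rewrite size_cat /= !nth_cat index_mem yu ltnn subnn /=.
  have -> : (size u + (index z v).+1 < size u) = false by slia.
  rewrite nth_index // addKn /= nth_index //.
  have := Mv _ zv; have : index z v < size v by rewrite index_mem.
  by move=> h1 h2; split => //; slia.
move Ke: (size u) => K.
have Sx := perm_size Px; rewrite size_cat /= size_iota Ke in Sx.
have Ru : forall y, y \in u -> y < a.+1 + K.
  move=> y yu; rewrite ltnNge; apply/negP => hy.
  have Hs : {subset iota a.+1 (y - a) <= u}.
    move=> w; rewrite mem_iota => hw.
    have := Mx w; rewrite mem_cat inE.
    have -> : (a <= w < a + k.+1) = true by have := Mu _ yu; slia.
    case/orP => [//|/orP[/eqP E|wv]]; first by slia.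
    by have := Luv _ _ yu wv; slia.
  have := uniq_leq_size (iota_uniq _ _) Hs; rewrite size_iota Ke; slia.
have [_ Pu] := uniq_min_size Uu (s2 := iota a.+1 K)
  (fun y yu => ltac:(rewrite mem_iota; have := Ru y yu; have := Mu y yu; slia))
  (ltac:(by rewrite size_iota Ke)).

have Pu' : perm_eq u (iota a.+1 K) by apply: uniq_perm => //; apply: iota_uniq.
have Sv : size (iota (a + K.+1) (k.+1 - K.+1)) <= size v.
  by rewrite size_iota -Sx addnS subSS addKn.
have Rv : {subset v <= iota (a + K.+1) (k.+1 - K.+1)}.
  move=> z zv; rewrite mem_iota; have := Mv z zv.
  case: (ltnP z (a.+1 + K)) => hz; last slia.
  have zu : z \in u by rewrite Pu mem_iota; have := Mv z zv; slia.
  case: (Dv _ zu zv).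
have [_ Pv] := uniq_min_size Uv Rv Sv.
have Pv' : perm_eq v (iota (a + K.+1) (k.+1 - K.+1)) by apply: uniq_perm => //; apply: iota_uniq.
have KS : K < s.
  rewrite ltnNge; apply/negP => sK.
  have : a + s \in u by rewrite Pu mem_iota; slia.
  move=> asu.
  have := Ix a (leqnn a) (ltac:(slia)).
  rewrite !index_cat (negbTE au) asu /= eqxx addn0 Ke.
  have : index (a + s) u < K by rewrite -Ke index_mem.
  by move=> h1 h2; have := leq_ltn_trans h2 h1; rewrite ltnn.
have [Au Aav] := avoid_split Ax.
have [_ Av] := avoid_split (u := [:: a]) Aav.
rewrite /=; apply/allpairsPdep; exists K.+1, (u, v); split => //.
  rewrite mem_iota; slia.
apply/allpairsP; exists (u, v); split => //=.
- apply: IH; first slia.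
  split => // y h1 h2.
  have yu : y \in u by rewrite Pu mem_iota; slia.
  have ysu : y + s \in u by rewrite Pu mem_iota; slia.
  have := Ix y (ltac:(slia)) (ltac:(slia)).
  by rewrite !index_cat yu ysu.
- apply: IH; first slia.
  split => // y h1 h2.
  have yu : y \notin u by rewrite Pu mem_iota; slia.
  have ysu : y + s \notin u by rewrite Pu mem_iota; slia.
  have := Ix y (ltac:(slia)) (ltac:(slia)).
  rewrite !index_cat (negbTE yu) (negbTE ysu) /=.
  case: (a =P y) => [?|_]; first slia.
  case: (a =P y + s) => [?|_]; first slia.
  by rewrite leq_add2l ltnS.
Qed.

Lemma index_pre k (t : seq nat) z : 1 <= z <= k ->
  index z (iota 1 k ++ t) = z.-1.
Proof.
move=> hz; rewrite index_cat mem_iota.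
have -> : (1 <= z < 1 + k) = true by slia.
have E : z = nth 0 (iota 1 k) z.-1 by rewrite nth_iota; slia.
rewrite {1}E index_uniq ?iota_uniq ?size_iota; slia.
Qed.

Lemma index_post k (t : seq nat) z : k < z ->
  index z (iota 1 k ++ t) = k + index z t.
Proof.
move=> hz; rewrite index_cat mem_iota size_iota.
by have -> : (1 <= z < 1 + k) = false by slia.
Qed.

Lemma cover_le s n x y : comb_cover s n x y -> comb_le s n x y.
Proof.
move=> H; apply: (comb_le_step H); apply: comb_le_refl.
case: H => h [[h1 [-> h2]]|[-> h2]]; slia.
Qed.

Theorem theorem2 (s n : nat) :
  1 <= s -> s <= n ->
  count_is (fun p : seq nat => comb_linext s n p /\ avoids312 p) (d s (n - s + 1)).
Proof.
move=> s1 sn; set m := n - s + 1.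
have En : iota 1 n = iota 1 s.-1 ++ iota s m.
  rewrite -(_ : 1 + s.-1 = s); last slia.
  by rewrite -iotaD; congr iota; rewrite /m; slia.
exists [seq iota 1 s.-1 ++ t | t <- gen s m s m]; split.
- rewrite map_inj_uniq; first exact: gen_uniq.
  by move=> x y /eqP; rewrite eqseq_cat // => /andP[_ /eqP].
- move=> p; split.
  + case/mapP => t Ht ->.
    have [Pt At It] := gen_sound (leqnn m) Ht.
    have Mt : forall z, (z \in t) = (s <= z < s + m) by move=> z; rewrite (perm_mem Pt) mem_iota.
    split; last first.
      apply: avoid_join => //; last exact: avoid_iota.
      by move=> x y; rewrite mem_iota Mt; slia.
    split; first by rewrite En perm_cat2l.
    move=> x y; elim => [//|a b c Hc _ IH]; apply: leq_trans IH.
    case: Hc => ha [[h1 [-> h2]]|[-> h2]].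
    * rewrite index_pre; last slia.
      case: (ltnP (a + 1) s) => hs.
        by rewrite index_pre; slia.
      by rewrite index_post; slia.
    * case: (ltnP a s) => hs.
        rewrite index_pre; last slia.
        by rewrite index_post; slia.
      rewrite !index_post; try slia.
      by rewrite leq_add2l; apply: It; rewrite /m; slia.
  + move=> [[Pp Op] Ap].
    have Up : uniq p by rewrite (perm_uniq Pp) iota_uniq.
    have Sp : size p = n by rewrite (perm_size Pp) size_iota.
    have Mp : forall z, (z \in p) = (1 <= z < 1 + n) by move=> z; rewrite (perm_mem Pp) mem_iota.
    have Ord : forall i, 1 <= i -> i < s -> index i p <= index i.+1 p.
      move=> i h1 h2; apply: Op; apply: cover_le; split => //; left; split; slia.
    have Pre : forall i, i <= s.-1 -> take i p = iota 1 i.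
      elim => [|i IH] hi; first by rewrite take0.
      have ip : i < size p by slia.
      rewrite (take_nth 0 ip) IH; last slia.
      rewrite -cats1 (_ : iota 1 i.+1 = iota 1 i ++ [:: 1 + i]); last first.
        by rewrite -[i.+1]addn1 iotaD.
      congr (_ ++ [:: _]).
      set y := nth 0 p i.
      have Ep : p = iota 1 i ++ drop i p by rewrite -IH ?cat_take_drop //; slia.
      have yd : y \in drop i p by rewrite (drop_nth 0 ip) mem_head.
      have yp : y \in p by rewrite Mp /y; rewrite -Mp mem_nth.
      have yt : y \notin iota 1 i.
        move: Up; rewrite Ep cat_uniq => /and3P[_ /hasPn H _]; exact: H.
      have y1 : i < y by move: yt yp; rewrite mem_iota Mp; slia.
      apply/eqP; rewrite eqn_leq y1 andbT leqNgt; apply/negP => y2.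
      have i1p : i.+1 \in p by rewrite Mp; slia.
      have i2p : i.+2 \in p by rewrite Mp; slia.
      have u1 : i <= index i.+1 p.
        by rewrite Ep index_post; slia.
      have u2 : index i.+1 p != i.
        apply/eqP => E; move: (nth_index 0 i1p); rewrite E -/y; slia.
      have w1 : index i.+1 p <= index i.+2 p by apply: Ord; slia.
      have w2 : index i.+1 p != index i.+2 p.
        apply/eqP => E; move: (nth_index 0 i1p); rewrite E nth_index //; slia.
      have w3 : i < index i.+2 p by slia.
      have yne : y != i.+2.
        by apply/eqP => E; have := index_uniq 0 ip Up; rewrite -/y E; slia.
      apply: Ap; exists i, (index i.+1 p), (index i.+2 p).
      rewrite !nth_index // -/y index_mem; split => //; slia.
    have Ep : p = iota 1 s.-1 ++ drop s.-1 p by rewrite -Pre ?cat_take_drop.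
    apply/mapP; exists (drop s.-1 p) => //.
    apply: gen_complete => //.
    split.
    * by rewrite -(perm_cat2l (iota 1 s.-1)) -Ep -En.
    * by have := avoid_split (u := iota 1 s.-1) (v := drop s.-1 p); rewrite -Ep => /(_ Ap) [].
    * move=> y h1 h2.
      have h3 : y + s <= n by move: h2; rewrite /m; slia.
      have C : comb_cover s n y (y + s) by split; [slia|right; split].
      have := Op y (y + s) (cover_le C).
      by rewrite {1 2}Ep !index_post ?leq_add2l; [|slia|slia].
- by rewrite size_map size_gen.
Qed.
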